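(* For $h=2$ the universal variety equals the quasi-shuffle group component: $\mathcal V_{d,2}=\hat{\mathcal G}^{2}(\mathfrak A_d)$ for every $d\ge1$.
   Context: $\mathtt{K}$ is an algebraically closed field of characteristic zero, $\mathfrak A_d=\mathtt{K}[X_1,\dots,X_d]/\{\text{constants}\}$ with basis the non-constant monomials, graded by degree. Words in monomials form a basis of $T(\mathfrak A_d)$; $T^{h}(\mathfrak A_d)$ (resp. $T^{\le h}$) is the span of words of height (sum of degrees of letters) $=h$ (resp. $\le h$), $\pi^h$ the projection onto $T^h$, and $\langle\sum\alpha_w w,v\rangle=\alpha_v$. For $x=(x_1,\dots,x_N)\in(\mathtt{K}^d)^N$, $\langle \mathrm{DS}(x),\mathsf{e}_1\bullet\cdots\bullet\mathsf{e}_k\rangle=\sum_{1\le i_1<\cdots<i_k\le N}\mathsf{e}_1(x_{i_1})\cdots\mathsf{e}_k(x_{i_k})$, and $\mathrm{DS}^h(x)$ is its projection to $T^h(\mathfrak A_d)$. The discrete signature variety $\mathcal V_{d,h,N}$ is the Zariski closure of the image of $\mathrm{DS}^h$ on $(\mathtt{K}^d)^N$; these form an ascending chain in $N$ which stabilizes, and the universal variety $\mathcal V_{d,h}$ is their union. The quasi-shuffle product is defined by $\varepsilon$ a unit and $w\bullet i\ \overline{\sqcup\!\sqcup}\ v\bullet j=(w\ \overline{\sqcup\!\sqcup}\ v\bullet j)\bullet i+(w\bullet i\ \overline{\sqcup\!\sqcup}\ v)\bullet j+(w\ \overline{\sqcup\!\sqcup}\ v)\bullet ij$; $\hat{\mathcal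 G}^{\le h}(\mathfrak A_d)$ is the set of $\mathsf{u}\in T^{\le h}(\mathfrak A_d)$ with coefficient $1$ on $\varepsilon$ and $\langle\mathsf{u},w\ \overline{\sqcup\!\sqcup}\ u\rangle=\langle\mathsf{u},w\rangle\langle\mathsf{u},u\rangle$ whenever the heights sum to $\le h$, and $\hat{\mathcal G}^{h}(\mathfrak A_d)=\pi^h(\hat{\mathcal G}^{\le h}(\mathfrak A_d))$. The paper conjectures $\mathcal V_{d,h}=\hat{\mathcal G}^{h}(\mathfrak A_d)$ for all $h$; this corollary is the case $h=2$. *)

(* Defs.v *)
From HB Require Import structures.
From mathcomp Require Import all_boot all_order all_algebra.
From mathcomp Require Import mpoly.
Set Implicit Arguments. Unset Strict Implicit. Unset Printing Implicit Defensive.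
Import GRing.Theory.
Local Open Scope ring_scope.

Section DiscreteSignature.
Variables (K : fieldType) (d : nat).

(* Letters: monomials X^m in d variables, m : 'X_{1..d}; the basis of A_d
   consists of the NON-constant ones (mdeg m > 0). Words: seq of letters. *)
Definition letter := 'X_{1..d}.
Definition word := seq letter.

Definition height (w : word) : nat := sumn (map (@mdeg d) w).

Definition valid_word (w : word) : bool := all (fun m => (0 < mdeg m)%N) w.

(* Elements of T(A_d) are represented by their coefficient functions
   <u, w> = u w, word -> K. *)
Definition tensor := word -> K.

Definition in_T (h : nat) (u : tensor) : Prop :=
  forall w, u w != 0 -> valid_word w && (height w == h).
Definition in_Tle (h : nat) (u : tensor) : Prop :=
  forall w, u w != 0 -> valid_word w && (height w <= h)%N.

Definition proj (h : nat) (u : tensor) : tensor :=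
  fun w => if valid_word w && (height w == h) then u w else 0.

Definition mon_eval (m : letter) (x : 'I_d -> K) : K := \prod_(i < d) x i ^+ m i.

(* <DS(x), e_1 ... e_k> = sum_{i_1 < ... < i_k} e_1(x_{i_1}) ... e_k(x_{i_k});
   increasing index tuples are enumerated as masks of size N with k ones. *)
Definition DS_coef (x : seq ('I_d -> K)) (w : word) : K :=
  \sum_(b : (size x).-tuple bool | count id b == size w)
     \prod_(p <- zip w (mask b x)) mon_eval p.1 p.2.

Definition DS (x : seq ('I_d -> K)) : tensor := DS_coef x.
Definition DSh (h : nat) (x : seq ('I_d -> K)) : tensor := proj h (DS x).

(* Zariski closure inside the finite-dimensional space T^h(A_d): the common
   zero set of all polynomials in (finitely many) coordinates vanishing on S. *)
Definition zariski_closure_T (h : nat) (S : tensor -> Prop) (v : tensor) : Prop :=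
  in_T h v /\
  forall (n : nat) (ws : 'I_n -> word) (p : {mpoly K[n]}),
    (forall s, S s -> p.@[fun i => s (ws i)] = 0) -> p.@[fun i => v (ws i)] = 0.

Definition DS_image (h N : nat) (u : tensor) : Prop :=
  exists x : seq ('I_d -> K), size x = N /\ u = DSh h x.

Definition sig_variety (h N : nat) : tensor -> Prop :=
  zariski_closure_T h (DS_image h N).
Definition universal_variety (h : nat) (v : tensor) : Prop :=
  exists N, sig_variety h N v.

(* Quasi-shuffle product, as a multiset (sequence) of words, each with
   coefficient 1.  qs_rev works on reversed words (head = last letter) and
   implements  w.i qsh v.j = (w qsh v.j).i + (w.i qsh v).j + (w qsh v).(ij),
   where ij is the product of the monomials i and j. *)
Fixpoint qs_rev (a : word) : word -> seq word :=
  match a with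
  | [::] => fun b => [:: b]
  | i :: a' =>
      fix qs_b (b : word) : seq word :=
        match b with
        | [::] => [:: i :: a']
        | j :: b' =>
            map (cons i) (qs_rev a' (j :: b')) ++
            map (cons j) (qs_b b') ++
            map (cons (mnm_add i j)) (qs_rev a' b')
        end
  end.

Definition qshuffle (w v : word) : seq word := map rev (qs_rev (rev w) (rev v)).

Definition pair_sum (u : tensor) (P : seq word) : K := \sum_(z <- P) u z.

Definition Ghat_le (h : nat) (u : tensor) : Prop :=
  in_Tle h u /\ u [::] = 1 /\
  forall w v : word, valid_word w -> valid_word v ->
    (height w + height v <= h)%N ->
    pair_sum u (qshuffle w v) = u w * u v.

Definition Ghat (h : nat) (v : tensor) : Prop :=
  exists u, Ghat_le h u /\ v = proj h u.

End DiscreteSignature.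

(* Main.v *)
Require Import Defs.
From HB Require Import structures.
From mathcomp Require Import all_boot all_order all_algebra.
From mathcomp Require Import mpoly.
From mathcomp Require Import ring zify.
From Stdlib Require Import FunctionalExtensionality.
Set Implicit Arguments. Unset Strict Implicit. Unset Printing Implicit Defensive.
Import GRing.Theory.
Local Open Scope ring_scope.

Section S1.
Variables (K : fieldType) (d : nat).

Fixpoint DSr (x : seq ('I_d -> K)) (w : word d) : K :=
  match x with
  | [::] => (w == [::])%:R
  | p :: x' => DSr x' w + (if w is m :: w' then mon_eval m p * DSr x' w' else 0)
  end.

Lemma DS_coefE x w : DS_coef x w = DSr x w.
Proof.
elim: x w => [|p x IH] w.
  rewrite /DS_coef big_mkcond (big_pred1 [tuple]) => [|b]; last by apply/esym/eqP; apply: tuple0.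
  by case: w => [|m w] //=; rewrite big_nil.
rewrite /DS_coef /=.
pose h := fun q : bool * (size x).-tuple bool => [tuple of q.1 :: q.2].
rewrite (reindex h); last first.
  exists (fun t : (size x).+1.-tuple bool => (thead t, [tuple of behead t])).
    by move=> [c t] _; rewrite /h /=; congr (_, _); apply: val_inj.
  by move=> t _; rewrite /h /=; apply: val_inj; case: t => [[|c t]] //=.
rewrite big_mkcond -(pair_bigA _ (fun c t => if count id (h (c, t)) == size w then
   \prod_(p0 <- zip w (mask (h (c, t)) (p :: x))) mon_eval p0.1 p0.2 else 0)) /=.
rewrite big_bool /= -IH /DS_coef [X in _ = X + _]big_mkcond addrC; congr (_ + _).
case: w => [|m w] /=.
  by rewrite big1.
rewrite -IH /DS_coef [in RHS]big_mkcond big_distrr /=. apply: eq_bigr => t _; rewrite add1n eqSS.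
by case: ifP; rewrite ?mulr0 // big_cons.
Qed.

Local Notation U i := (mnm1 i).

Lemma mon_evalU i (p : 'I_d -> K) : mon_eval (U i) p = p i.
Proof.
rewrite /mon_eval (bigD1 i) //= mnm1E eqxx expr1 big1 ?mulr1 // => k /negbTE.
by rewrite mnm1E eq_sym => ->; rewrite expr0.
Qed.

Lemma mon_evalD m1 m2 (p : 'I_d -> K) :
  mon_eval (mnm_add m1 m2) p = mon_eval m1 p * mon_eval m2 p.
Proof.
rewrite /mon_eval -big_split /=; apply: eq_bigr => k _.
by rewrite -exprD -mnmDE.
Qed.

Lemma DSr_nil x : DSr x [::] = 1.
Proof. by elim: x => [|p x IH] //=; rewrite IH addr0. Qed.

Lemma DSr_key x m1 m2 :
  DSr x [:: m1; m2] + DSr x [:: m2; m1] + DSr x [:: mnm_add m1 m2] =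
  DSr x [:: m1] * DSr x [:: m2].
Proof.
elim: x => [|p x IH] /=; first by rewrite !addr0 mulr0.
have E : DSr x [:: mnm_add m1 m2] =
  DSr x [:: m1] * DSr x [:: m2] - DSr x [:: m1; m2] - DSr x [:: m2; m1]
  by rewrite -IH; ring.
rewrite !DSr_nil mon_evalD E; ring.
Qed.

Lemma DSr_cat1 y z m : DSr (y ++ z) [:: m] = DSr y [:: m] + DSr z [:: m].
Proof.
elim: y => [|p y IH] /=; first by rewrite add0r.
by rewrite IH !DSr_nil; ring.
Qed.

Lemma DSr_cat2 y z m1 m2 : DSr (y ++ z) [:: m1; m2] =
  DSr y [:: m1; m2] + DSr z [:: m1; m2] + DSr y [:: m1] * DSr z [:: m2].
Proof.
elim: y => [|p y IH] /=; first by rewrite mul0r !add0r addr0.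
rewrite IH DSr_cat1 !DSr_nil; ring.
Qed.

End S1.
Section S2.
Variable d : nat.
Local Notation U i := (@mnm1 d i).

Lemma mdeg_add (m1 m2 : 'X_{1..d}) : mdeg (mnm_add m1 m2) = (mdeg m1 + mdeg m2)%N.
Proof. exact: mdegD. Qed.

Lemma deg2P (m : 'X_{1..d}) : mdeg m = 2%N -> exists i j, m = mnm_add (U i) (U j).
Proof.
move=> Hm.
have [i Hi] : exists i, (0 < m i)%N.
  case: (boolP [exists i, (0 < m i)%N]) => [/existsP[i Hi]|/existsPn H]; first by exists i.
  have : m = 0%MM by apply/mnmP => i; rewrite mnm0E; move: (H i); rewrite lt0n negbK => /eqP.
  by move=> E; move: Hm; rewrite E mdeg0.
have le : (U i <= m)%MM by apply/mnm_lepP => k; rewrite mnm1E; case: eqP => [<-|].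
have E := submK le.
have : mdeg (m - U i)%MM = 1%N.
  by move: Hm; rewrite -{1}E mdegD mdeg1 => /eqP; rewrite -[2%N]/(1 + 1)%N eqn_add2r => /eqP.
move/eqP/mdeg1P => [j /eqP Hj]; exists j, i.
by rewrite -E Hj.
Qed.

Lemma height_nil : height (d:=d) [::] = 0%N. Proof. by []. Qed.

Lemma valid_cons (m : letter d) w : valid_word (m :: w) = (0 < mdeg m)%N && valid_word w.
Proof. by []. Qed.

Lemma height_cons (m : letter d) w : height (m :: w) = (mdeg m + height w)%N.
Proof. by []. Qed.

Lemma height1P (w : word d) : valid_word w -> height w = 1%N -> exists i, w = [:: U i].
Proof.
case: w => [|m [|m' w]] //.
  rewrite /valid_word /height /= addn0 andbT => _ /eqP /mdeg1P [i /eqP ->]; by exists i.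
rewrite valid_cons valid_cons height_cons height_cons => /and3P[h1 h2 _].
move=> E; exfalso; move: h1 h2 E; lia.
Qed.

Lemma height2P (w : word d) : valid_word w -> height w = 2%N ->
  (exists i j, w = [:: mnm_add (U i) (U j)]) \/ (exists i j, w = [:: U i; U j]).
Proof.
case: w => [|m [|m' [|m'' w]]] //.
- rewrite /height /= addn0 => _ /deg2P [i [j ->]]; left; by exists i, j.
- rewrite !valid_cons !height_cons addn0 => /and3P[h1 h2 _] E.
  have E1 : mdeg m = 1%N by move: h1 h2 E; lia.
  have E2 : mdeg m' = 1%N by move: h1 h2 E; lia.
  move/eqP/mdeg1P: E1 => [i /eqP ->]; move/eqP/mdeg1P: E2 => [j /eqP ->].
  right; by exists i, j.
- rewrite !valid_cons !height_cons => /and4P[h1 h2 h3 _] E.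
  exfalso; move: h1 h2 h3 E; lia.
Qed.

Lemma valid_height_pos (w : word d) : valid_word w -> w != [::] -> (0 < height w)%N.
Proof.
case: w => [|m w] // /andP[h _] _; rewrite height_cons; exact: leq_trans h (leq_addr _ _).
Qed.

Lemma qsh_nil_l (w : word d) : qshuffle [::] w = [:: w].
Proof. by rewrite /qshuffle /= revK. Qed.

Lemma qsh_nil_r (w : word d) : qshuffle w [::] = [:: w].
Proof. rewrite /qshuffle /=; have := revK w; case: (rev w) => [|i a] /= <- //. Qed.

Lemma qsh_11 (m1 m2 : letter d) :
  qshuffle [:: m1] [:: m2] = [:: [:: m2; m1]; [:: m1; m2]; [:: mnm_add m1 m2]].
Proof. by []. Qed.

End S2.

Section S3.
Variables (K : fieldType) (d : nat).
Local Notation U i := (@mnm1 d i).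
Local Open Scope ring_scope.

Definition Sf (s : tensor K d) i j :=
  s [:: U i; U j] + s [:: U j; U i] + s [:: mnm_add (U i) (U j)].

Lemma valid2a i j : valid_word [:: U i; U j] && (height [:: U i; U j] == 2%N).
Proof. by rewrite /valid_word /height /= !mdeg1. Qed.
Lemma valid2b i j : valid_word [:: mnm_add (U i) (U j)] && (height [:: mnm_add (U i) (U j)] == 2%N).
Proof. by rewrite /valid_word /height /= mdeg_add !mdeg1. Qed.

Lemma Sf_DSh (x : seq ('I_d -> K)) i j : Sf (DSh 2 x) i j = DS x [:: U i] * DS x [:: U j].
Proof. by rewrite /Sf /DSh /proj !valid2a valid2b /DS !DS_coefE DSr_key. Qed.

Lemma Sf_sym (s : tensor K d) i j : Sf s i j = Sf s j i.
Proof. by rewrite /Sf addmC [s [:: U i; U j] + _]addrC. Qed.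

Lemma minors N (v : tensor K d) : zariski_closure_T 2 (DS_image 2 N) v ->
  forall i j k l, Sf v i k * Sf v j l = Sf v i l * Sf v j k.
Proof.
move=> [_ Hc] i j k l.
pose X (a : nat) : {mpoly K[12]} := 'X_(inord a).
pose p := (X 0%N + X 1%N + X 2%N) * (X 3%N + X 4%N + X 5%N) - (X 6%N + X 7%N + X 8%N) * (X 9%N + X 10%N + X 11%N).
pose L := [:: [:: U i; U k]; [:: U k; U i]; [:: mnm_add (U i) (U k)];
              [:: U j; U l]; [:: U l; U j]; [:: mnm_add (U j) (U l)];
              [:: U i; U l]; [:: U l; U i]; [:: mnm_add (U i) (U l)];
              [:: U j; U k]; [:: U k; U j]; [:: mnm_add (U j) (U k)]].
pose ws (a : 'I_12) := nth [::] L a.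
have Ev : forall s : tensor K d, p.@[fun a => s (ws a)] =
    Sf s i k * Sf s j l - Sf s i l * Sf s j k.
  by move=> s; rewrite /p /X !(mevalB, mevalM, mevalD, mevalXU) /ws !inordK.
apply/eqP; rewrite -subr_eq0 -Ev; apply/eqP; apply: Hc => s [x [_ ->]].
by rewrite Ev !Sf_DSh; ring.
Qed.

End S3.

Section S4.
Variables (K : closedFieldType) (d : nat).
Local Notation U i := (@mnm1 d i).
Local Open Scope ring_scope.

Lemma sqrt_ex (c : K) : exists r : K, r ^+ 2 = c.
Proof.
have [r Hr] := @solve_monicpoly K 2 (nth 0 [:: c]) isT; exists r.
by rewrite Hr !big_ord_recl big_ord0 /= expr0 mulr1 mul0r !addr0.
Qed.

Lemma sumU (a : 'I_d -> K) k : \sum_i ((U k) i)%:R * a i = a k.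
Proof.
rewrite (bigD1 k) //= mnm1E eqxx mul1r big1 ?addr0 // => i /negbTE.
by rewrite mnm1E eq_sym => ->; rewrite mul0r.
Qed.

Lemma rank1 (S : 'I_d -> 'I_d -> K) :
  (forall i j, S i j = S j i) ->
  (forall i j k l, S i k * S j l = S i l * S j k) ->
  exists a : 'I_d -> K, forall i j, a i * a j = S i j.
Proof.
move=> Hs Hm.
case: (boolP [exists i, S i i != 0]) => [/existsP [i0 Hi0]|/existsPn H].
  have [r Hr] := sqrt_ex (S i0 i0).
  have r0 : r != 0 by apply: contraNneq Hi0 => r0; rewrite -Hr r0 expr0n.
  exists (fun j => S i0 j / r) => i j.
  have E : S i j = S i0 i * S i0 j / S i0 i0.
    have := Hm i0 i i0 j; rewrite [S i i0]Hs => E.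
    by apply: (mulfI Hi0); rewrite E; field.
  by rewrite E -Hr; field.
exists (fun _ => 0) => i j; rewrite mul0r.
have := Hm i j i j; rewrite (eqP (negbNE (H i))) (eqP (negbNE (H j))) mul0r [S j i]Hs.
by move/esym/eqP; rewrite mulf_eq0 orbb => /eqP.
Qed.

Lemma dir1 N (v : tensor K d) : sig_variety 2 N v -> Ghat 2 v.
Proof.
move=> H; have Hm := minors H; have inT := H.1.
have [a Ha] := rank1 (@Sf_sym K d v) Hm.
pose u : tensor K d := fun w => match w with
  | [::] => 1
  | [:: m] => if mdeg m == 1%N then \sum_i ((m i)%:R * a i) else v w
  | _ => v w end.
exists u; split; last first.
  apply: functional_extensionality => w; rewrite /proj.
  case: ifP => [/andP[Vw /eqP Hw]|Hn].
    case: w Vw Hw => [|m [|m' w]] //= _; rewrite /height /= addn0 => ->; by [].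
  by apply/eqP; apply: (contraFT _ Hn) => /inT.
split; [|split].
- case=> [|m [|m' w]] /=.
  + by [].
  + case: ifP => [/eqP h _|_ /inT].
      by rewrite /valid_word /height /= h.
    by move=> /andP[Hv /eqP Hh]; apply/andP; split => //; rewrite Hh.
  + by move/inT => /andP[Hv /eqP Hh]; apply/andP; split => //; rewrite Hh.
- by [].
move=> w1 w2 V1 V2 Hh.
case: w1 V1 Hh => [|m1 w1'] V1 Hh.
  by rewrite qsh_nil_l /pair_sum big_seq1 mul1r.
case: w2 V2 Hh => [|m2 w2'] V2 Hh.
  by rewrite qsh_nil_r /pair_sum big_seq1 mulr1.
have P1 := valid_height_pos V1 isT; have P2 := valid_height_pos V2 isT.
have [i Ei] : exists i, m1 :: w1' = [:: U i] by apply: height1P => //; lia.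
have [j Ej] : exists j, m2 :: w2' = [:: U j] by apply: height1P => //; lia.
rewrite Ei Ej qsh_11 /pair_sum !big_cons big_nil /u /= !mdeg1 eqxx !sumU mdeg_add !mdeg1 /=.
by rewrite Ha /Sf; ring.
Qed.

End S4.

Section S5.
Variables (K : closedFieldType) (d : nat).
Local Notation U i := (@mnm1 d i).
Local Open Scope ring_scope.

Definition pt (al be : K) (i j : 'I_d) : 'I_d -> K :=
  fun k => al * (i == k)%:R + be * (j == k)%:R.
Definition Tb i j (la : K) := [:: pt 1 0 i j; pt 0 (- la) i j; pt (-1) la i j].
Definition Pb (al be : K) i j := [:: pt al be i j; pt (- al) (- be) i j].
Definition blk (io : K) i j la := Tb i j la ++ (Pb io 0 i j ++ Pb 0 (io * la) i j).

Lemma Tb_L1 i j la k : DSr (Tb i j la) [:: U k] = 0.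
Proof. by rewrite /= !mon_evalU /pt; ring. Qed.
Lemma Pb_L1 al be i j k : DSr (Pb al be i j) [:: U k] = 0.
Proof. by rewrite /= !mon_evalU /pt; ring. Qed.
Lemma blk_L1 io i j la k : DSr (blk io i j la) [:: U k] = 0.
Proof. by rewrite /blk !DSr_cat1 Tb_L1 !Pb_L1 !addr0. Qed.

Lemma Tb_M i j la k l : DSr (Tb i j la) [:: U k; U l] =
  - ((i == k)%:R * (i == l)%:R) + la * (j == k)%:R * (i == l)%:R
  - la * la * ((j == k)%:R * (j == l)%:R).
Proof. by rewrite /= !mon_evalU ?DSr_nil /pt; ring. Qed.

Lemma Pb1_M io i j k l : DSr (Pb io 0 i j) [:: U k; U l] =
  - (io * io) * ((i == k)%:R * (i == l)%:R).
Proof. by rewrite /= !mon_evalU ?DSr_nil /pt; ring. Qed.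

Lemma Pb2_M io la i j k l : DSr (Pb 0 (io * la) i j) [:: U k; U l] =
  - (io * io) * (la * la) * ((j == k)%:R * (j == l)%:R).
Proof. by rewrite /= !mon_evalU ?DSr_nil /pt; ring. Qed.

Lemma blk_M io (Hio : io * io = -1) i j la k l :
  DSr (blk io i j la) [:: U k; U l] = la * (j == k)%:R * (i == l)%:R.
Proof.
rewrite /blk !DSr_cat2 Tb_L1 !Pb_L1 !mul0r !addr0 Tb_M Pb1_M Pb2_M Hio; ring.
Qed.

Lemma flat_L1 (T : Type) (F : T -> seq ('I_d -> K)) (s : seq T) k :
  (forall q k, DSr (F q) [:: U k] = 0) -> DSr (flatten (map F s)) [:: U k] = 0.
Proof.
move=> H; elim: s => [|q s IH] /=; first by [].
by rewrite DSr_cat1 IH H addr0.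
Qed.

Lemma flat_M (T : Type) (F : T -> seq ('I_d -> K)) (s : seq T) k l :
  (forall q k, DSr (F q) [:: U k] = 0) ->
  DSr (flatten (map F s)) [:: U k; U l] = \sum_(q <- s) DSr (F q) [:: U k; U l].
Proof.
move=> H; elim: s => [|q s IH] /=; first by rewrite big_nil.
by rewrite DSr_cat2 IH H mul0r addr0 big_cons.
Qed.

Lemma dir2 (v : tensor K d) : Ghat 2 v -> universal_variety 2 v.
Proof.
move=> [u [[Tu [u0 Hu]] ->]].
have [io Hio2] := imaginary_exists K.
have Hio : io * io = -1 by rewrite -expr2.
pose a i := u [:: U i]; pose Mt i j := u [:: U i; U j].
pose F := fun q : 'I_d * 'I_d => blk io q.2 q.1 (Mt q.1 q.2).
pose y := flatten (map F (index_enum {: 'I_d * 'I_d})).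
have FL1 : forall q k, DSr (F q) [:: U k] = 0 by move=> q k; exact: blk_L1.
have yL1 : forall k, DSr y [:: U k] = 0 by move=> k; exact: flat_L1.
have yM : forall k l, DSr y [:: U k; U l] = Mt k l.
  move=> k l; rewrite /y flat_M //.
  under eq_bigr => q _ do rewrite /F blk_M //.
  rewrite (bigD1 (k, l)) //= !eqxx !mulr1 big1 ?addr0 // => [[a1 b1]] /=.
  rewrite xpair_eqE => /nandP [] /negbTE -> ; by rewrite ?mulr0 ?mul0r.
pose x := (a : 'I_d -> K) :: y.
have L1x : forall k, DSr x [:: U k] = a k.
  by move=> k; rewrite /= yL1 DSr_nil mulr1 add0r mon_evalU.
have Mx : forall k l, DSr x [:: U k; U l] = Mt k l.
  by move=> k l; rewrite /= yM yL1 mulr0 addr0.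
have Ex : DSh 2 x = proj 2 u.
  apply: functional_extensionality => w; rewrite /DSh /proj.
  case: ifP => // /andP[Vw /eqP Hw]; rewrite /DS DS_coefE.
  case: (height2P Vw Hw) => [[i [j ->]] | [i [j ->]]]; last exact: Mx.
  have K1 := DSr_key x (U i) (U j).
  have K2 := Hu [:: U i] [:: U j].
  rewrite qsh_11 /pair_sum !big_cons big_nil addr0 in K2.
  have V1 : forall k, valid_word [:: U k] by move=> k; rewrite /valid_word /= mdeg1.
  have H2 : (height [:: U i] + height [:: U j] <= 2)%N by rewrite /height /= !mdeg1.
  have K3 := K2 (V1 i) (V1 j) H2.
  rewrite !L1x !Mx in K1.
  have -> : DSr x [:: mnm_add (U i) (U j)] = a i * a j - Mt i j - Mt j i by rewrite -K1; ring.
  rewrite /Mt /a -K3.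
  ring.
exists (size x); rewrite /sig_variety /zariski_closure_T; split.
  by move=> w; rewrite /proj; case: ifP => [H _|_]; rewrite ?H ?eqxx.
move=> n ws p Hp; apply: Hp; exists x; split => //; by rewrite Ex.
Qed.

End S5.

Theorem corollary5p7 (K : closedFieldType) (Kchar0 : ([pchar K] =i pred0)%R)
  (d : nat) (hd : (0 < d)%N) :
  forall v : tensor K d, universal_variety 2 v <-> Ghat 2 v.
Proof.
move=> v; split; first by move=> [N H]; exact: dir1 H.
exact: dir2.
Qed.
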